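(* Let $\kappa_1,\kappa_2,\kappa_3>0$ and let $Y_t$ be the continuous-time Markov chain on $\mathbb N_0$ with transitions $x\to x+1$ at rate $\kappa_1x+\kappa_2x(x-1)$ and $x\to x-2$ at rate $\kappa_3x(x-1)(x-2)$ (the mass-action network $S\to2S$, $2S\to3S$, $3S\to S$). Then every stationary distribution $\pi$ of $Y_t$ with unbounded support satisfies $\pi\in\mathcal P^{1+}_1\cap\mathcal P^{1-}_1$.
   Context: A stationary distribution is a probability measure $\pi$ on $\mathbb N_0$ satisfying the master equation $0=\sum_{\omega}\lambda_\omega(x-\omega)\pi(x-\omega)-\sum_\omega\lambda_\omega(x)\pi(x)$ for all $x$, where $\lambda_\omega(x)$ is the rate of $x\to x+\omega$ (zero at negative arguments). $T_\pi(x)=\sum_{y\ge x}\pi(y)$. For non-negative $f,g$, $f\lesssim g$ (equivalently $g\gtrsim f$) means there are $C,N>0$ with $f(x)\le Cg(x)$ for all $x\ge N$; $\exp(-h(x)(1+o(1)))$ means $\exp(-h(x)(1+\epsilon(x)))$ for some $\epsilon(x)\to0$. $\mathcal P^{1+}_a$ ($a>0$) is the set of probability distributions $\pi$ with $T_\pi(x)\lesssim\exp(-ax\log x(1+o(1)))$, and $\mathcal P^{1-}_a$ those with $T_\pi(x)\gtrsim\exp(-ax\log x(1+o(1)))$. *)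

(* Defs.v *)
From Stdlib Require Import Reals ZArith List Lra.
From Coquelicot Require Import Coquelicot.
Open Scope R_scope.

(* A reaction is a pair (omega, lambda_omega): jump vector and rate function on Z. *)
Definition reaction := (Z * (Z -> R))%type.

Definition piZ (pi : nat -> R) (z : Z) : R :=
  if (z <? 0)%Z then 0 else pi (Z.to_nat z).

Definition prob_dist (pi : nat -> R) : Prop :=
  (forall x, 0 <= pi x) /\ is_series pi 1.

Definition master_rhs (rs : list reaction) (pi : nat -> R) (x : Z) : R :=
  fold_right (fun (r : reaction) acc =>
     let (w, lam) := r in
     lam (x - w)%Z * piZ pi (x - w)%Z - lam x * piZ pi x + acc) 0 rs.

Definition stationary (rs : list reaction) (pi : nat -> R) : Prop :=
  prob_dist pi /\ forall x : nat, master_rhs rs pi (Z.of_nat x) = 0.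

Definition Tail (pi : nat -> R) (x : nat) : R := Series (fun k => pi (x + k)%nat).

Definition lesssim (f g : nat -> R) : Prop :=
  exists (C : R) (N : nat), 0 < C /\ (0 < N)%nat /\ forall x, (N <= x)%nat -> f x <= C * g x.

Definition xlogx_profile (a : R) (eps : nat -> R) (x : nat) : R :=
  exp (- (a * INR x * ln (INR x) * (1 + eps x))).

Definition P1plus (a : R) (pi : nat -> R) : Prop :=
  prob_dist pi /\
  exists eps : nat -> R, is_lim_seq eps 0 /\ lesssim (Tail pi) (xlogx_profile a eps).

Definition P1minus (a : R) (pi : nat -> R) : Prop :=
  prob_dist pi /\
  exists eps : nat -> R, is_lim_seq eps 0 /\ lesssim (xlogx_profile a eps) (Tail pi).

Definition unbounded_support (pi : nat -> R) : Prop :=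
  forall N : nat, exists x : nat, (N <= x)%nat /\ 0 < pi x.

(* The network S -> 2S (rate k1 x), 2S -> 3S (rate k2 x(x-1)), 3S -> S (rate k3 x(x-1)(x-2)):
   jumps +1 at rate k1 x + k2 x(x-1), and -2 at rate k3 x(x-1)(x-2). *)
Definition network (k1 k2 k3 : R) : list reaction :=
  (1%Z, fun x : Z => k1 * IZR x + k2 * IZR x * (IZR x - 1)) ::
  ((-2)%Z, fun x : Z => k3 * IZR x * (IZR x - 1) * (IZR x - 2)) :: nil.

(* Main.v *)
Require Import Defs.
From Stdlib Require Import Reals Lra Lia ZArith.
From Coquelicot Require Import Coquelicot.
Open Scope R_scope.

Definition Bf (k1 k2 X : R) := k1 * X + k2 * X * (X - 1).
Definition Df (k3 X : R) := k3 * X * (X - 1) * (X - 2).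

Lemma piZ_nat pi n : piZ pi (Z.of_nat n) = pi n.
Proof. unfold piZ. replace (Z.of_nat n <? 0)%Z with false by (symmetry; apply Z.ltb_ge; lia).
  now rewrite Nat2Z.id. Qed.

Lemma master_eq k1 k2 k3 pi x :
  master_rhs (network k1 k2 k3) pi (Z.of_nat x) = 0 ->
  (match x with O => 0 | S n => Bf k1 k2 (INR n) * pi n end)
  + Df k3 (INR x + 2) * pi (x + 2)%nat = (Bf k1 k2 (INR x) + Df k3 (INR x)) * pi x.
Proof.
  unfold master_rhs, network; cbn [List.fold_right].
  replace (Z.of_nat x - -2)%Z with (Z.of_nat (x+2)) by lia.
  rewrite !piZ_nat, <- !INR_IZR_INZ, plus_INR. simpl (INR 2).
  destruct x as [|n].
  - unfold piZ at 1. simpl. unfold Bf, Df. simpl. intros H; nra.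
  - replace (Z.of_nat (S n) - 1)%Z with (Z.of_nat n) by lia.
    rewrite piZ_nat, <- INR_IZR_INZ, S_INR. unfold Bf, Df. intros H. nra.
Qed.

Lemma cut_eq k1 k2 k3 pi :
  (forall x : nat, master_rhs (network k1 k2 k3) pi (Z.of_nat x) = 0) ->
  forall x, Bf k1 k2 (INR x) * pi x =
    Df k3 (INR x + 1) * pi (S x) + Df k3 (INR x + 2) * pi (S (S x)).
Proof.
  intros H x. induction x as [|n IH].
  - pose proof (master_eq k1 k2 k3 pi 0 (H 0%nat)) as E. simpl in E |- *.
    unfold Bf, Df in *. nra.
  - pose proof (master_eq k1 k2 k3 pi (S n) (H (S n))) as E.
    replace (S n + 2)%nat with (S (S (S n))) in E by lia.
    rewrite S_INR in *. unfold Bf, Df in *. nra.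
Qed.
Lemma ln1p_le y : 0 < 1 + y -> ln (1 + y) <= y.
Proof. intros H. rewrite <- (ln_exp y) at 2. apply ln_le; auto. apply exp_ineq1_le. Qed.

Lemma lnfact_bounds n : (1 <= n)%nat ->
  INR n * ln (INR n) - INR n <= ln (INR (fact n)) <= INR n * ln (INR n).
Proof.
  induction n as [|n IH]; intros Hn; [lia|].
  destruct (Nat.eq_dec n 0) as [->|Hn0].
  - simpl. rewrite ln_1. lra.
  - assert (Hn1 : (1 <= n)%nat) by lia. specialize (IH Hn1).
    assert (HX : 1 <= INR n) by (apply (le_INR 1); lia).
    change (fact (S n)) with (S n * fact n)%nat.
    rewrite mult_INR, ln_mult; [|apply lt_0_INR; lia|apply INR_fact_lt_0].
    rewrite S_INR.
    assert (Hl : ln (INR n + 1) = ln (INR n) + ln (1 + / INR n)).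
    { rewrite <- ln_mult by (try lra; pose proof (Rinv_0_lt_compat (INR n)); lra).
      f_equal. field. lra. }
    assert (H1 : ln (1 + / INR n) <= / INR n).
    { apply ln1p_le. pose proof (Rinv_0_lt_compat (INR n)); lra. }
    assert (H2 : 0 <= ln (1 + / INR n)).
    { rewrite <- ln_1. apply ln_le; [lra|]. pose proof (Rinv_0_lt_compat (INR n)); lra. }
    assert (H3 : INR n * / INR n = 1) by (field; lra).
    assert (H4 : 0 <= ln (INR n)) by (rewrite <- ln_1; apply ln_le; lra).
    rewrite Hl. split; nra.
Qed.

Definition epsL (L : R) (x : nat) : R :=
  (ln (INR (fact x)) - INR x * ln L) / (INR x * ln (INR x)) - 1.

Lemma profile_epsL L x : 0 < L -> (2 <= x)%nat ->
  xlogx_profile 1 (epsL L) x = L ^ x / INR (fact x).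
Proof.
  intros HL Hx. unfold xlogx_profile, epsL.
  assert (HX : 2 <= INR x) by (apply (le_INR 2); lia).
  assert (Hln : 0 < ln (INR x)) by (rewrite <- ln_1; apply ln_increasing; lra).
  replace (- (1 * INR x * ln (INR x) * (1 + ((ln (INR (fact x)) - INR x * ln L) /
     (INR x * ln (INR x)) - 1))))
    with (INR x * ln L + - ln (INR (fact x))) by (field; split; lra).
  rewrite exp_plus, exp_Ropp, exp_ln by apply INR_fact_lt_0.
  rewrite <- (Rpower_pow x L HL). unfold Rpower. reflexivity.
Qed.

Lemma epsL_lim L : 0 < L -> is_lim_seq (epsL L) 0.
Proof.
  intros HL. apply is_lim_seq_spec. intros [e He]. simpl.
  set (M := 1 + Rabs (ln L)).
  destruct (archimed (exp (M / e))) as [Hu _].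
  assert (Hpos : (0 < up (exp (M / e)))%Z).
  { apply lt_IZR. pose proof (exp_pos (M/e)). simpl. lra. }
  exists (2 + Z.to_nat (up (exp (M / e))))%nat. intros n Hn.
  assert (HX : 2 <= INR n) by (apply (le_INR 2); lia).
  assert (HXb : exp (M / e) < INR n).
  { apply Rlt_le_trans with (IZR (up (exp (M / e)))); [lra|].
    rewrite <- (Z2Nat.id (up _)) by lia. rewrite <- INR_IZR_INZ. apply le_INR. lia. }
  assert (Hln : M / e < ln (INR n)).
  { rewrite <- (ln_exp (M / e)). apply ln_increasing; [apply exp_pos|lra]. }
  assert (HM : 0 < M) by (unfold M; pose proof (Rabs_pos (ln L)); lra).
  assert (HMe : 0 < M / e) by (apply Rdiv_lt_0_compat; lra).
  destruct (lnfact_bounds n) as [B1 B2]; [lia|].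
  unfold epsL. rewrite Rminus_0_r.
  set (S := ln (INR (fact n))) in *. set (X := INR n) in *. set (l := ln X) in *.
  assert (Hl : M < e * l).
  { apply (Rmult_lt_compat_l e) in Hln; [|lra]. unfold Rdiv in Hln.
    rewrite <- Rmult_assoc, (Rmult_comm e M), Rmult_assoc, Rinv_r, Rmult_1_r in Hln; lra. }
  replace ((S - X * ln L) / (X * l) - 1) with ((S - X * ln L - X * l) / (X * l))
    by (field; split; lra).
  assert (HXl : 0 < X * l) by nra.
  rewrite Rabs_div by lra. rewrite (Rabs_pos_eq (X * l)) by lra.
  apply Rlt_div_l; [lra|].
  pose proof (Rle_abs (ln L)). pose proof (Rle_abs (- ln L)). rewrite Rabs_Ropp in *.
  apply Rabs_def1; unfold M in Hl; nra.
Qed.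
Lemma fact_step n : INR (fact (S n)) = (INR n + 1) * INR (fact n).
Proof. change (fact (S n)) with (S n * fact n)%nat. rewrite mult_INR, S_INR. ring. Qed.

Lemma ratio_up (f : nat -> R) K N0 : 0 < K ->
  (forall x, (N0 <= x)%nat -> f (S x) <= K / (INR x + 1) * f x) ->
  forall m, f (N0 + m)%nat <= (f N0 * INR (fact N0) / K ^ N0) * K ^ (N0 + m) / INR (fact (N0 + m)).
Proof.
  intros HK H m. induction m as [|m IH].
  - rewrite Nat.add_0_r. pose proof (INR_fact_lt_0 N0). pose proof (pow_lt K N0 HK).
    right. field. lra.
  - replace (N0 + S m)%nat with (S (N0 + m)) by lia.
    eapply Rle_trans; [apply H; lia|].
    pose proof (pos_INR (N0 + m)).
    assert (Hc : 0 <= K / (INR (N0 + m) + 1)) by (apply Rlt_le, Rdiv_lt_0_compat; lra).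
    eapply Rle_trans; [apply Rmult_le_compat_l; [exact Hc| exact IH]|].
    rewrite fact_step. simpl (K ^ S _). pose proof (INR_fact_lt_0 (N0+m)).
    pose proof (INR_fact_lt_0 N0). pose proof (pow_lt K N0 HK).
    right. field. repeat split; lra.
Qed.

Lemma ratio_low (f : nat -> R) K N0 : 0 < K ->
  (forall x, (N0 <= x)%nat -> K / (INR x + 1) * f x <= f (S x)) ->
  forall m, (f N0 * INR (fact N0) / K ^ N0) * K ^ (N0 + m) / INR (fact (N0 + m)) <= f (N0 + m)%nat.
Proof.
  intros HK H m. induction m as [|m IH].
  - rewrite Nat.add_0_r. pose proof (INR_fact_lt_0 N0). pose proof (pow_lt K N0 HK).
    right. field. lra.
  - replace (N0 + S m)%nat with (S (N0 + m)) by lia.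
    eapply Rle_trans; [|apply H; lia].
    pose proof (pos_INR (N0 + m)).
    assert (Hc : 0 <= K / (INR (N0 + m) + 1)) by (apply Rlt_le, Rdiv_lt_0_compat; lra).
    eapply Rle_trans; [|apply Rmult_le_compat_l; [exact Hc| exact IH]].
    rewrite fact_step. simpl (K ^ S _). pose proof (INR_fact_lt_0 (N0+m)).
    pose proof (INR_fact_lt_0 N0). pose proof (pow_lt K N0 HK).
    right. field. repeat split; lra.
Qed.

Lemma series_ge2 (a : nat -> R) : (forall n, 0 <= a n) -> ex_series a ->
  a 0%nat + a 1%nat <= Series a.
Proof.
  intros Ha He. rewrite Series_incr_1 by exact He.
  rewrite Series_incr_1 by (apply (ex_series_incr_1 a); exact He).
  assert (0 <= Series (fun k => a (S (S k)))).
  { assert (Z0 : Series (fun k => 0 * a (S (S k))) = 0) by (rewrite Series_scal_l; ring).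
    rewrite <- Z0. apply Series_le. intros; split; [rewrite Rmult_0_l; lra|rewrite Rmult_0_l; apply Ha].
    apply (ex_series_incr_n a 2); exact He. }
  lra.
Qed.

Lemma tail_ex (pi : nat -> R) x : is_series pi 1 -> ex_series (fun k => pi (x + k)%nat).
Proof. intros H. apply (ex_series_incr_n pi x). exists 1. exact H. Qed.

Theorem mainTheorem12 (k1 k2 k3 : R) (pi : nat -> R) :
  0 < k1 -> 0 < k2 -> 0 < k3 ->
  stationary (network k1 k2 k3) pi ->
  unbounded_support pi ->
  P1plus 1 pi /\ P1minus 1 pi.
Proof.
  intros Hk1 Hk2 Hk3 [[Hnn Hs] Hm] Hub.
  pose proof (cut_eq k1 k2 k3 pi Hm) as Hcut.
  split.
  - split; [split; auto|].
    set (K := (k1 + k2) / k3).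
    assert (HK : 0 < K) by (unfold K; apply Rdiv_lt_0_compat; lra).
    exists (epsL K). split; [apply epsL_lim; exact HK|].
    assert (Hr : forall x, (2 <= x)%nat -> pi (S x) <= K / (INR x + 1) * pi x).
    { intros x Hx. specialize (Hcut x).
      assert (HX : 2 <= INR x) by (apply (le_INR 2); lia).
      pose proof (Hnn x). pose proof (Hnn (S x)). pose proof (Hnn (S (S x))).
      set (X := INR x) in *.
      apply (Rmult_le_reg_l (k3 * (X + 1) * X * (X - 1))).
      { apply Rmult_lt_0_compat; [|lra]. apply Rmult_lt_0_compat; [|lra]. nra. }
      replace (k3 * (X + 1) * X * (X - 1) * (K / (X + 1) * pi x))
        with ((k1 + k2) * X * (X - 1) * pi x) by (unfold K; field; lra).
      unfold Bf, Df in Hcut.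
      assert (0 <= k3 * (X + 2) * (X + 2 - 1) * (X + 2 - 2) * pi (S (S x))).
      { apply Rmult_le_pos; auto. apply Rmult_le_pos; [|lra]. nra. }
      assert (k1 * X * pi x <= k1 * X * (X - 1) * pi x).
      { apply Rmult_le_compat_r; auto.
        assert (0 <= k1 * X * (X - 2)) by (apply Rmult_le_pos; [apply Rmult_le_pos|]; lra).
        lra. }
      lra. }
    set (A := pi 2%nat * INR (fact 2) / K ^ 2).
    assert (HA : 0 <= A).
    { unfold A. apply Rmult_le_pos; [apply Rmult_le_pos; [apply Hnn|apply pos_INR]|].
      apply Rlt_le, Rinv_0_lt_compat, pow_lt, HK. }
    assert (Hb : forall x, (2 <= x)%nat -> pi x <= A * K ^ x / INR (fact x)).
    { intros x Hx. pose proof (ratio_up pi K 2 HK Hr (x - 2)) as H.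
      replace (2 + (x - 2))%nat with x in H by lia. exact H. }
    destruct (archimed (2 * K)) as [Hu _].
    assert (Hpos : (0 < up (2 * K))%Z) by (apply lt_IZR; simpl; lra).
    set (N0 := (2 + Z.to_nat (up (2 * K)))%nat).
    assert (Hh : forall x, (N0 <= x)%nat -> pi (S x) <= / 2 * pi x).
    { intros x Hx. eapply Rle_trans; [apply Hr; unfold N0 in Hx; lia|].
      apply Rmult_le_compat_r; [apply Hnn|].
      assert (2 * K < INR x + 1).
      { apply Rlt_le_trans with (IZR (up (2 * K))); [lra|].
        rewrite <- (Z2Nat.id (up _)) by lia. rewrite <- INR_IZR_INZ.
        pose proof (le_INR (Z.to_nat (up (2 * K))) x ltac:(unfold N0 in Hx; lia)). lra. }
      apply Rmult_le_reg_l with (INR x + 1); [pose proof (pos_INR x); lra|].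
      replace ((INR x + 1) * (K / (INR x + 1))) with K by (field; pose proof (pos_INR x); lra).
      pose proof (pos_INR x). lra. }
    assert (Hg : forall x k, (N0 <= x)%nat -> pi (x + k)%nat <= pi x * (/ 2) ^ k).
    { intros x k Hx. induction k as [|k IH].
      - rewrite Nat.add_0_r. simpl. lra.
      - replace (x + S k)%nat with (S (x + k)) by lia.
        eapply Rle_trans; [apply Hh; lia|]. simpl. nra. }
    assert (HT : forall x, (N0 <= x)%nat -> Tail pi x <= 2 * pi x).
    { intros x Hx. unfold Tail.
      assert (Geo : is_series (fun k => (/ 2) ^ k) 2).
      { assert (E2 : / (1 - / 2) = 2) by field.
        assert (G : Rabs (/ 2) < 1) by (rewrite Rabs_pos_eq; lra).
        pose proof (is_series_geom (/ 2) G) as G2. rewrite E2 in G2. exact G2. }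
      eapply Rle_trans.
      { apply (Series_le _ (fun k => pi x * (/ 2) ^ k)).
        - intros k; split; [apply Hnn|apply Hg; exact Hx].
        - apply (ex_series_scal_l (V := R_NormedModule) (pi x)). exists 2. exact Geo. }
      rewrite Series_scal_l. rewrite (is_series_unique (pow (/ 2)) 2 Geo). lra. }
    exists (2 * A + 1), N0. split; [lra|]. split; [unfold N0; lia|].
    intros x Hx. rewrite profile_epsL by (auto; unfold N0 in Hx; lia).
    eapply Rle_trans; [apply HT; exact Hx|].
    assert (0 <= K ^ x / INR (fact x)).
    { apply Rmult_le_pos; [apply pow_le; lra|apply Rlt_le, Rinv_0_lt_compat, INR_fact_lt_0]. }
    pose proof (Hb x ltac:(unfold N0 in Hx; lia)).
    unfold Rdiv in *. nra.
  - split; [split; auto|].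
    set (c := k2 / (4 * k3)).
    assert (Hc : 0 < c) by (unfold c; apply Rdiv_lt_0_compat; lra).
    set (L := c / (1 + c)).
    assert (HL : 0 < L) by (unfold L; apply Rdiv_lt_0_compat; lra).
    exists (epsL L). split; [apply epsL_lim; exact HL|].
    set (u := fun x => pi x + pi (S x)).
    assert (Hr : forall x, (2 <= x)%nat -> L / (INR x + 1) * u x <= u (S x)).
    { intros x Hx. specialize (Hcut x).
      assert (HX : 2 <= INR x) by (apply (le_INR 2); lia).
      pose proof (Hnn x). pose proof (Hnn (S x)). pose proof (Hnn (S (S x))).
      unfold u. set (X := INR x) in *. set (v := pi (S x) + pi (S (S x))).
      assert (Hc1 : c * pi x <= (X + 1) * v).
      { apply (Rmult_le_reg_l (k3 * X * (X + 2))).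
        { apply Rmult_lt_0_compat; [|lra]. nra. }
        replace (k3 * X * (X + 2) * (c * pi x)) with (k2 * X * (X + 2) / 4 * pi x)
          by (unfold c; field; lra).
        unfold Bf, Df in Hcut.
        assert (0 <= k2 * X * (X - 2)) by (apply Rmult_le_pos; [apply Rmult_le_pos|]; lra).
        assert (0 <= k1 * X) by (apply Rmult_le_pos; lra).
        assert (k2 * X * (X + 2) / 4 <= k1 * X + k2 * X * (X - 1)) by lra.
        assert (k3 * (X + 1) * (X + 1 - 1) * (X + 1 - 2) <= k3 * (X + 2) * (X + 2 - 1) * (X + 2 - 2))
          by nra.
        assert (k3 * (X + 1) * (X + 1 - 1) * (X + 1 - 2) * pi (S x) <=
                k3 * (X + 2) * (X + 2 - 1) * (X + 2 - 2) * pi (S x))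
          by (apply Rmult_le_compat_r; auto).
        unfold v. nra. }
      apply (Rmult_le_reg_l ((X + 1) * (1 + c))); [nra|].
      replace ((X + 1) * (1 + c) * (L / (X + 1) * (pi x + pi (S x))))
        with (c * (pi x + pi (S x))) by (unfold L; field; lra).
      assert (pi (S x) <= v) by (unfold v; lra).
      assert (c * pi (S x) <= c * v) by (apply Rmult_le_compat_l; lra).
      assert (0 <= c * v * X) by (apply Rmult_le_pos; [apply Rmult_le_pos|]; unfold v in *; lra).
      lra. }
    destruct (Hub 2%nat) as [x0 [Hx0 Hp0]].
    set (r := u x0 * INR (fact x0) / L ^ x0).
    assert (Hrp : 0 < r).
    { unfold r, u. apply Rmult_lt_0_compat; [apply Rmult_lt_0_compat|].
      - pose proof (Hnn (S x0)); lra.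
      - apply INR_fact_lt_0.
      - apply Rinv_0_lt_compat, pow_lt, HL. }
    assert (Hlow : forall x, (x0 <= x)%nat -> r * L ^ x / INR (fact x) <= u x).
    { intros x Hx.
      pose proof (ratio_low u L x0 HL (fun y Hy => Hr y ltac:(lia)) (x - x0)) as H.
      replace (x0 + (x - x0))%nat with x in H by lia. exact H. }
    exists (/ r), x0. split; [apply Rinv_0_lt_compat; exact Hrp|]. split; [lia|].
    intros x Hx. rewrite profile_epsL by (auto; lia).
    assert (HTu : u x <= Tail pi x).
    { unfold Tail, u. pose proof (series_ge2 (fun k => pi (x + k)%nat)
        (fun n => Hnn _) (tail_ex pi x Hs)) as H. simpl in H.
      rewrite Nat.add_0_r, Nat.add_1_r in H. exact H. }
    pose proof (Hlow x Hx).
    apply (Rmult_le_reg_l r); [exact Hrp|].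
    replace (r * (/ r * Tail pi x)) with (Tail pi x) by (field; lra).
    unfold Rdiv in *. lra.
Qed.
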